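(* Let $\zeta\in\mathbb{C}^*$. The group $\overline{G}_q(\zeta):=\mathrm{PSL}_q(2,\mathbb{Z})|_{q=\zeta}$ is finite if and only if $\zeta$ is a primitive $n$-th root of unity for some $n\in\{2,3,4,5\}$.
   Context: Let $q$ be a formal parameter and let $R_q=\begin{pmatrix} q & 1\\ 0 & 1\end{pmatrix}$, $S_q=\begin{pmatrix} 0 & -q^{-1}\\ 1 & 0\end{pmatrix}\in \mathrm{GL}(2,\mathbb{Z}[q,q^{-1}])$. Let $G_q=\langle R_q,S_q\rangle$, and $\mathrm{PSL}_q(2,\mathbb{Z})=G_q/\langle qE_2,-E_2\rangle$, where $E_2$ is the $2\times2$ identity matrix and $\langle qE_2,-E_2\rangle$ is a normal subgroup of $G_q$. For $\zeta\in\mathbb{C}^*$, let $G_q(\zeta)=\{M_q|_{q=\zeta}: M_q\in G_q\}\subset\mathrm{GL}(2,\mathbb{C})$, and $\mathrm{PSL}_q(2,\mathbb{Z})|_{q=\zeta}$ denotes $G_q(\zeta)/\langle \zeta E_2,-E_2\rangle$. *)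

(* Defs.v *)
From mathcomp Require Import all_boot all_order all_algebra.
From mathcomp Require Import complex Rstruct.
Set Implicit Arguments. Unset Strict Implicit. Unset Printing Implicit Defensive.
Import Order.TTheory GRing.Theory Num.Theory.
Local Open Scope ring_scope.

Definition C : numClosedFieldType := (Rdefinitions.R)[i].

Definition Rz (z : C) : 'M[C]_2 :=
  \matrix_(i < 2, j < 2)
    (if (val i == 0%N) && (val j == 0%N) then z
     else if (val i == 0%N) then 1
     else if (val j == 0%N) then 0 else 1).
Definition Sz (z : C) : 'M[C]_2 :=
  \matrix_(i < 2, j < 2)
    (if (val i == 0%N) && (val j == 0%N) then 0
     else if (val i == 0%N) then - z^-1
     else if (val j == 0%N) then 1 else 0).

(* G_q(z) = { M_q|_{q=z} : M_q in G_q = <R_q, S_q> }.  Since specialization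
   q |-> z is a group homomorphism (z <> 0), this is the subgroup of GL(2,C)
   generated by R_q|_{q=z}, S_q|_{q=z}. *)
Inductive in_Gz (z : C) : 'M[C]_2 -> Prop :=
  | Gz_one : in_Gz z 1%:M
  | Gz_R : in_Gz z (Rz z)
  | Gz_S : in_Gz z (Sz z)
  | Gz_mul M N : in_Gz z M -> in_Gz z N -> in_Gz z (M *m N)
  | Gz_inv M : in_Gz z M -> in_Gz z (invmx M).

(* The normal subgroup <z E_2, -E_2> = { (-1)^b z^k E_2 }. *)
Definition in_Nz (z : C) (M : 'M[C]_2) : Prop :=
  exists (b : bool) (k : int), M = ((-1) ^+ b * z ^ k)%:M.

(* PSL_q(2,Z)|_{q=z} = G_q(z) / <z E_2, -E_2> is finite: finitely many cosets. *)
Definition PSLq_spec_finite (z : C) : Prop :=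
  exists s : seq 'M[C]_2,
    forall M, in_Gz z M -> exists2 A, A \in s & in_Nz z (M *m invmx A).

(* Main.v *)
Require Import Defs.
From mathcomp Require Import all_boot all_order all_algebra.
From mathcomp Require Import complex Rstruct zify ring lra.
Set Implicit Arguments. Unset Strict Implicit. Unset Printing Implicit Defensive.
Import Order.TTheory GRing.Theory Num.Theory.
Local Open Scope ring_scope.
Definition mk2 (a b c d : C) : 'M[C]_2 :=
  \matrix_(i < 2, j < 2)
    (if (val i == 0%N) then (if (val j == 0%N) then a else b)
     else (if (val j == 0%N) then c else d)).

Lemma mk2_mul a b c d a' b' c' d' :
  mk2 a b c d *m mk2 a' b' c' d' =
  mk2 (a * a' + b * c') (a * b' + b * d') (c * a' + d * c') (c * b' + d * d').
Proof.
apply/matrixP => i j; rewrite !mxE big_ord_recl big_ord1 !mxE /=.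
by case: i => [[|[|i]] Hi] //; case: j => [[|[|j]] Hj].
Qed.

Lemma mk2_scale k a b c d : k *: mk2 a b c d = mk2 (k * a) (k * b) (k * c) (k * d).
Proof.
by apply/matrixP => i j; rewrite !mxE; case: i => [[|[|i]] Hi] //; case: j => [[|[|j]] Hj].
Qed.

Lemma mk2_1 : mk2 1 0 0 1 = 1%:M.
Proof.
by apply/matrixP => i j; rewrite !mxE; case: i => [[|[|i]] Hi] //; case: j => [[|[|j]] Hj].
Qed.

Lemma mk2_eq a b c d a' b' c' d' : mk2 a b c d = mk2 a' b' c' d' ->
  [/\ a = a', b = b', c = c' & d = d'].
Proof.
move=> E.
have e := fun i j => congr1 (fun M : 'M[C]_2 => M i j) E.
move: (e ord0 ord0) (e ord0 ord_max) (e ord_max ord0) (e ord_max ord_max).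
by rewrite !mxE /=.
Qed.

Lemma Rz_mk2 z : Rz z = mk2 z 1 0 1.
Proof.
by apply/matrixP => i j; rewrite !mxE; case: i => [[|[|i]] Hi] //; case: j => [[|[|j]] Hj].
Qed.

Lemma Sz_mk2 z : Sz z = mk2 0 (- z^-1) 1 0.
Proof.
by apply/matrixP => i j; rewrite !mxE; case: i => [[|[|i]] Hi] //; case: j => [[|[|j]] Hj].
Qed.

Definition mat := (seq int * seq int * seq int * seq int)%type.
Fixpoint padd (p q : seq int) : seq int :=
  match p, q with
  | a :: p', b :: q' => (a + b) :: padd p' q'
  | [::], _ => q
  | _, [::] => p
  end.
Definition pscale (c : int) (p : seq int) := map (fun a => c * a) p.
Definition pshift (p : seq int) := rotr 1 p.
Definition pmul (n : nat) (p q : seq int) : seq int :=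
  foldr (fun a acc => padd (pscale a q) (pshift acc)) (nseq n 0) p.
Definition psub p q := padd p (pscale (-1) q).
Definition ztest (n : nat) (d : seq int) : bool :=
  if n == 4%N then
    (match d with [:: a; b; c; e] => (a == c) && (b == e) | _ => false end)
  else all (fun x => x == head 0 d) d.
Definition mono (n : nat) (b : bool) (k : nat) : seq int :=
  nseq k 0 ++ (if b then -1 else 1) :: nseq (n - k.+1) 0.
Definition mmul n (A B : mat) : mat :=
  let: (a, b, c, d) := A in let: (a', b', c', d') := B in
  (padd (pmul n a a') (pmul n b c'), padd (pmul n a b') (pmul n b d'),
   padd (pmul n c a') (pmul n d c'), padd (pmul n c b') (pmul n d d')).
Definition mscal n (p : seq int) (B : mat) : mat :=
  let: (a, b, c, d) := B in (pmul n p a, pmul n p b, pmul n p c, pmul n p d).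
Definition mzero n (A B : mat) : bool :=
  let: (a, b, c, d) := A in let: (a', b', c', d') := B in
  [&& ztest n (psub a a'), ztest n (psub b b'), ztest n (psub c c') & ztest n (psub d d')].
Definition wf n (A : mat) : bool :=
  let: (a, b, c, d) := A in
  [&& size a == n, size b == n, size c == n & size d == n].
Definition scals n := [seq (b, k) | b <- [:: false; true], k <- iota 0 n].
Definition chk n (gens L : seq mat) : bool :=
  all (wf n) L && all (wf n) gens &&
  all (fun g => all (fun A => has (fun B => has (fun c =>
        mzero n (mmul n g A) (mscal n (mono n c.1 c.2) B)) (scals n)) L) L) gens.

Section Eval.
Variable z : C.
Fixpoint ev (p : seq int) : C := if p is a :: q then a%:~R + z * ev q else 0.
Definition evm (A : mat) : 'M[C]_2 :=
  let: (a, b, c, d) := A in mk2 (ev a) (ev b) (ev c) (ev d).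

Lemma ev_padd p q : ev (padd p q) = ev p + ev q.
Proof.
elim: p q => [|a p IH] [|b q] /=; rewrite ?add0r ?addr0 //.
by rewrite IH intrD mulrDr addrACA.
Qed.

Lemma ev_scale c p : ev (pscale c p) = c%:~R * ev p.
Proof.
elim: p => [|a p IH] /=; first by rewrite mulr0.
by rewrite IH intrM mulrDr mulrCA.
Qed.

Lemma ev_rcons p a : ev (rcons p a) = ev p + a%:~R * z ^+ size p.
Proof.
elim: p => [|b p IH] /=; first by rewrite mulr0 addr0 expr0 mulr1 add0r.
by rewrite IH mulrDr addrA exprS mulrCA.
Qed.

Lemma size_padd p q : size (padd p q) = maxn (size p) (size q).
Proof. by elim: p q => [|a p IH] [|b q] //=; rewrite IH maxnSS. Qed.

Lemma ev_shift p : z ^+ size p = 1 -> ev (pshift p) = z * ev p.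
Proof.
case/lastP: p => [|q a] /=; first by rewrite mulr0.
rewrite /pshift rotr1_rcons size_rcons /= ev_rcons => H.
by rewrite mulrDr mulrCA -exprS H mulr1 addrC.
Qed.

Lemma ev_nseq0 n : ev (nseq n 0) = 0.
Proof. by elim: n => //= n ->; rewrite mulr0 addr0. Qed.

Lemma size_pmul n p q : size q = n -> size (pmul n p q) = n.
Proof.
move=> Hq; elim: p => [|a p IH] /=; first by rewrite size_nseq.
by rewrite size_padd size_map /pshift size_rotr IH Hq maxnn.
Qed.

Lemma ev_pmul n p q : size q = n -> z ^+ n = 1 -> ev (pmul n p q) = ev p * ev q.
Proof.
move=> Hq Hz; elim: p => [|a p IH] /=; first by rewrite ev_nseq0 mul0r.
rewrite ev_padd ev_scale ev_shift ?size_pmul ?Hq // IH.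
by rewrite mulrDl mulrA.
Qed.

Lemma ev_cat0 k s : ev (nseq k 0 ++ s) = z ^+ k * ev s.
Proof. by elim: k => [|k IH] /=; rewrite ?mul1r // IH add0r exprS mulrA. Qed.

Lemma ev_mono n b k : ev (mono n b k) = (-1) ^+ b * z ^+ k.
Proof.
rewrite /mono ev_cat0 /= ev_nseq0 mulr0 addr0 mulrC; congr (_ * _).
by case: b => /=; rewrite ?expr1 ?expr0 ?intrN ?rmorph1.
Qed.

Lemma size_mono n b k : (k < n)%N -> size (mono n b k) = n.
Proof. move=> H; rewrite size_cat /= !size_nseq; lia. Qed.

Lemma size_psub p q : size (psub p q) = maxn (size p) (size q).
Proof. by rewrite size_padd size_map. Qed.

Lemma ev_psub p q : ev (psub p q) = ev p - ev q.
Proof. by rewrite ev_padd ev_scale mulN1r. Qed.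

Lemma ev_nseq m c : (z - 1) * ev (nseq m c) = c%:~R * (z ^+ m - 1).
Proof.
elim: m => [|m IH] /=; first by rewrite mulr0 expr0 subrr mulr0.
by rewrite mulrDr mulrCA IH exprS; ring.
Qed.

Lemma ev_ztest n d : n.-primitive_root z -> (n \in [:: 2; 3; 4; 5])%N ->
  size d = n -> ztest n d -> ev d = 0.
Proof.
move=> Hp Hn Hs; rewrite /ztest.
have zn : z ^+ n = 1 by apply: prim_expr_order.
have z1 : z != 1.
  apply/eqP => E; move: (prim_order_dvd Hp 1); rewrite E expr1 eqxx.
  by move: Hn; rewrite !inE => /or4P[] /eqP -> .
case: eqP => [n4|n4].
  move: Hs zn Hp; rewrite n4 => Hs zn Hp; case: d Hs => [|a [|b [|c [|e [|]]]]] //= _ /andP[/eqP -> /eqP ->].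
  have z2 : z ^+ 2 = -1.
    have : (z ^+ 2 - 1) * (z ^+ 2 + 1) = 0.
      by rewrite -(subrr (1 : C)) -{3}zn; ring.
    move/eqP; rewrite mulf_eq0 => /orP[|]; last by rewrite addr_eq0 => /eqP.
    rewrite subr_eq0 => /eqP E; move: (prim_order_dvd Hp 2); rewrite E eqxx //.
  have -> : c%:~R + z * (e%:~R + z * (c%:~R + z * (e%:~R + z * 0))) =
     (c%:~R + z * e%:~R) * (1 + z ^+ 2) :> C by ring.
  by rewrite z2 subrr mulr0.
move/all_pred1P => E; rewrite E Hs.
have := ev_nseq n (head 0 d); rewrite zn subrr mulr0 => /eqP.
by rewrite mulf_eq0 subr_eq0 (negPf z1) => /eqP.
Qed.

Lemma evm_mmul n A B : wf n B -> z ^+ n = 1 -> evm (mmul n A B) = evm A *m evm B.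
Proof.
case: A => [[[a b] c] d]; case: B => [[[a' b'] c'] d'] /=.
move=> /and4P[/eqP ha /eqP hb /eqP hc /eqP hd] zn.
by rewrite mk2_mul !ev_padd !ev_pmul.
Qed.

Lemma evm_mscal n p B : wf n B -> z ^+ n = 1 -> evm (mscal n p B) = ev p *: evm B.
Proof.
case: B => [[[a' b'] c'] d'] /=.
move=> /and4P[/eqP ha /eqP hb /eqP hc /eqP hd] zn.
by rewrite mk2_scale !ev_pmul.
Qed.

Lemma wf_mmul n A B : wf n B -> wf n (mmul n A B).
Proof.
case: A => [[[a b] c] d]; case: B => [[[a' b'] c'] d'] /=.
move=> /and4P[/eqP ha /eqP hb /eqP hc /eqP hd].
by rewrite !size_padd !size_pmul // maxnn eqxx.
Qed.

Lemma wf_mscal n p B : wf n B -> wf n (mscal n p B).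
Proof.
case: B => [[[a' b'] c'] d'] /=.
move=> /and4P[/eqP ha /eqP hb /eqP hc /eqP hd].
by rewrite !size_pmul // eqxx.
Qed.

Lemma mzero_sound n A B : n.-primitive_root z -> (n \in [:: 2; 3; 4; 5])%N ->
  wf n A -> wf n B -> mzero n A B -> evm A = evm B.
Proof.
case: A => [[[a b] c] d]; case: B => [[[a' b'] c'] d'] /= Hp Hn.
move=> /and4P[/eqP ha /eqP hb /eqP hc /eqP hd].
move=> /and4P[/eqP ha' /eqP hb' /eqP hc' /eqP hd'].
move=> /and4P[t1 t2 t3 t4].
have E : forall p q, size p = n -> size q = n -> ztest n (psub p q) -> ev p = ev q.
  move=> p q hp hq t; apply/eqP; rewrite -subr_eq0 -ev_psub.
  by apply/eqP; apply: (ev_ztest Hp Hn) => //; rewrite size_psub hp hq maxnn.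
by rewrite (E a a') ?(E b b') ?(E c c') ?(E d d').
Qed.

Lemma chk_sound n gens L : n.-primitive_root z -> (n \in [:: 2; 3; 4; 5])%N ->
  chk n gens L -> forall g, g \in gens -> forall A, A \in L ->
  exists2 B, B \in L & exists b k, evm g *m evm A = ((-1) ^+ b * z ^+ k) *: evm B.
Proof.
move=> Hp Hn /andP[/andP[/allP wL /allP wG] /allP H] g gin A Ain.
have zn : z ^+ n = 1 by apply: prim_expr_order.
move: (H g gin) => /allP /(_ A Ain) /hasP [B Bin /hasP [[b k] _ /= Hz]].
exists B => //; exists b, k.
rewrite -(evm_mmul _ (wL _ Ain) zn) -(ev_mono n) -(evm_mscal _ (wL _ Bin) zn).
apply: (mzero_sound Hp Hn) => //; first by apply: wf_mmul; apply: wL.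
by apply: wf_mscal; apply: wL.
Qed.
End Eval.
Definition zer n : seq int := nseq n 0.
Definition Rm n : mat := (mono n false 1, mono n false 0, zer n, mono n false 0).
Definition Rim n : mat := (mono n false n.-1, mono n true n.-1, zer n, mono n false 0).
Definition Sm n : mat := (zer n, mono n true n.-1, mono n false 0, zer n).
Definition Sim n : mat := (zer n, mono n false 0, mono n true 1, zer n).
Definition Im n : mat := (mono n false 0, zer n, zer n, mono n false 0).
Definition gens n := [:: Rm n; Rim n; Sm n; Sim n].
Definition L2 : seq mat := [::
  ([:: Posz 1; Posz 0], [:: Posz 0; Posz 0], [:: Posz 0; Posz 0], [:: Posz 1; Posz 0]);
  ([:: Negz 0; Posz 0], [:: Posz 1; Posz 0], [:: Posz 0; Posz 0], [:: Posz 1; Posz 0]);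
  ([:: Posz 0; Posz 0], [:: Posz 1; Posz 0], [:: Posz 1; Posz 0], [:: Posz 0; Posz 0]);
  ([:: Posz 0; Posz 0], [:: Posz 1; Posz 0], [:: Negz 0; Posz 0], [:: Posz 1; Posz 0]);
  ([:: Posz 1; Posz 0], [:: Negz 0; Posz 0], [:: Posz 1; Posz 0], [:: Posz 0; Posz 0]);
  ([:: Negz 0; Posz 0], [:: Posz 0; Posz 0], [:: Negz 0; Posz 0], [:: Posz 1; Posz 0])
].
Definition L3 : seq mat := [::
  ([:: Posz 1; Posz 0; Posz 0], [:: Posz 0; Posz 0; Posz 0], [:: Posz 0; Posz 0; Posz 0], [:: Posz 1; Posz 0; Posz 0]);
  ([:: Posz 0; Posz 1; Posz 0], [:: Posz 1; Posz 0; Posz 0], [:: Posz 0; Posz 0; Posz 0], [:: Posz 1; Posz 0; Posz 0]);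
  ([:: Posz 0; Posz 0; Posz 0], [:: Posz 1; Posz 1; Posz 0], [:: Posz 1; Posz 0; Posz 0], [:: Posz 0; Posz 0; Posz 0]);
  ([:: Negz 0; Negz 0; Posz 0], [:: Posz 1; Posz 1; Posz 0], [:: Posz 0; Posz 0; Posz 0], [:: Posz 1; Posz 0; Posz 0]);
  ([:: Posz 0; Posz 0; Posz 0], [:: Posz 1; Posz 1; Posz 0], [:: Posz 0; Posz 1; Posz 0], [:: Posz 1; Posz 0; Posz 0]);
  ([:: Posz 1; Posz 0; Posz 0], [:: Negz 0; Posz 0; Posz 0], [:: Posz 1; Posz 0; Posz 0], [:: Posz 0; Posz 0; Posz 0]);
  ([:: Posz 0; Posz 0; Posz 0], [:: Posz 1; Posz 1; Posz 0], [:: Negz 0; Negz 0; Posz 0], [:: Posz 1; Posz 1; Posz 0]);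
  ([:: Posz 0; Posz 1; Posz 0], [:: Posz 0; Posz 0; Posz 0], [:: Posz 0; Posz 1; Posz 0], [:: Posz 1; Posz 0; Posz 0]);
  ([:: Posz 1; Posz 1; Posz 0], [:: Posz 0; Negz 0; Posz 0], [:: Posz 1; Posz 0; Posz 0], [:: Posz 0; Posz 0; Posz 0]);
  ([:: Posz 1; Posz 1; Posz 0], [:: Posz 0; Posz 0; Posz 0], [:: Posz 1; Posz 0; Posz 0], [:: Negz 0; Posz 0; Posz 0]);
  ([:: Negz 0; Negz 0; Posz 0], [:: Posz 0; Posz 1; Posz 0], [:: Negz 0; Negz 0; Posz 0], [:: Posz 1; Posz 1; Posz 0]);
  ([:: Negz 0; Posz 0; Posz 0], [:: Posz 1; Posz 0; Posz 0], [:: Posz 0; Posz 1; Posz 0], [:: Posz 1; Posz 0; Posz 0])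
].
Definition L4 : seq mat := [::
  ([:: Posz 1; Posz 0; Posz 0; Posz 0], [:: Posz 0; Posz 0; Posz 0; Posz 0], [:: Posz 0; Posz 0; Posz 0; Posz 0], [:: Posz 1; Posz 0; Posz 0; Posz 0]);
  ([:: Posz 0; Posz 1; Posz 0; Posz 0], [:: Posz 1; Posz 0; Posz 0; Posz 0], [:: Posz 0; Posz 0; Posz 0; Posz 0], [:: Posz 1; Posz 0; Posz 0; Posz 0]);
  ([:: Posz 0; Posz 0; Posz 0; Posz 0], [:: Posz 0; Posz 1; Posz 0; Posz 0], [:: Posz 1; Posz 0; Posz 0; Posz 0], [:: Posz 0; Posz 0; Posz 0; Posz 0]);
  ([:: Negz 0; Posz 0; Posz 0; Posz 0], [:: Posz 1; Posz 1; Posz 0; Posz 0], [:: Posz 0; Posz 0; Posz 0; Posz 0], [:: Posz 1; Posz 0; Posz 0; Posz 0]);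
  ([:: Posz 0; Posz 0; Posz 0; Posz 0], [:: Posz 0; Posz 1; Posz 0; Posz 0], [:: Posz 0; Posz 1; Posz 0; Posz 0], [:: Posz 1; Posz 0; Posz 0; Posz 0]);
  ([:: Posz 1; Posz 0; Posz 0; Posz 0], [:: Negz 0; Posz 0; Posz 0; Posz 0], [:: Posz 1; Posz 0; Posz 0; Posz 0], [:: Posz 0; Posz 0; Posz 0; Posz 0]);
  ([:: Posz 0; Negz 0; Posz 0; Posz 0], [:: Posz 0; Posz 1; Posz 0; Posz 0], [:: Posz 0; Posz 0; Posz 0; Posz 0], [:: Posz 1; Posz 0; Posz 0; Posz 0]);
  ([:: Posz 0; Posz 0; Posz 0; Posz 0], [:: Posz 0; Posz 1; Posz 0; Posz 0], [:: Negz 0; Posz 0; Posz 0; Posz 0], [:: Posz 1; Posz 1; Posz 0; Posz 0]);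
  ([:: Posz 0; Posz 1; Posz 0; Posz 0], [:: Posz 0; Posz 0; Posz 0; Posz 0], [:: Posz 0; Posz 1; Posz 0; Posz 0], [:: Posz 1; Posz 0; Posz 0; Posz 0]);
  ([:: Posz 1; Posz 1; Posz 0; Posz 0], [:: Posz 0; Negz 0; Posz 0; Posz 0], [:: Posz 1; Posz 0; Posz 0; Posz 0], [:: Posz 0; Posz 0; Posz 0; Posz 0]);
  ([:: Posz 0; Posz 1; Posz 0; Posz 0], [:: Posz 0; Posz 0; Posz 0; Posz 0], [:: Posz 1; Posz 0; Posz 0; Posz 0], [:: Negz 0; Posz 0; Posz 0; Posz 0]);
  ([:: Posz 0; Posz 0; Posz 0; Posz 0], [:: Posz 0; Posz 1; Posz 0; Posz 0], [:: Posz 0; Negz 0; Posz 0; Posz 0], [:: Posz 0; Posz 1; Posz 0; Posz 0]);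
  ([:: Negz 0; Posz 0; Posz 0; Posz 0], [:: Posz 0; Posz 1; Posz 0; Posz 0], [:: Negz 0; Posz 0; Posz 0; Posz 0], [:: Posz 1; Posz 1; Posz 0; Posz 0]);
  ([:: Negz 0; Posz 1; Posz 0; Posz 0], [:: Posz 1; Posz 0; Posz 0; Posz 0], [:: Posz 0; Posz 1; Posz 0; Posz 0], [:: Posz 1; Posz 0; Posz 0; Posz 0]);
  ([:: Negz 0; Posz 0; Posz 0; Posz 0], [:: Posz 0; Posz 1; Posz 0; Posz 0], [:: Posz 0; Posz 1; Posz 0; Posz 0], [:: Posz 0; Posz 0; Posz 0; Posz 0]);
  ([:: Posz 0; Posz 1; Posz 0; Posz 0], [:: Posz 0; Posz 0; Posz 0; Posz 0], [:: Posz 1; Posz 1; Posz 0; Posz 0], [:: Posz 0; Negz 0; Posz 0; Posz 0]);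
  ([:: Posz 0; Negz 0; Posz 0; Posz 0], [:: Negz 0; Posz 1; Posz 0; Posz 0], [:: Posz 0; Negz 0; Posz 0; Posz 0], [:: Posz 0; Posz 1; Posz 0; Posz 0]);
  ([:: Negz 0; Negz 0; Posz 0; Posz 0], [:: Posz 0; Posz 1; Posz 0; Posz 0], [:: Negz 0; Posz 0; Posz 0; Posz 0], [:: Posz 1; Posz 1; Posz 0; Posz 0]);
  ([:: Posz 0; Negz 0; Posz 0; Posz 0], [:: Negz 0; Posz 1; Posz 0; Posz 0], [:: Negz 0; Posz 0; Posz 0; Posz 0], [:: Posz 0; Posz 1; Posz 0; Posz 0]);
  ([:: Negz 0; Posz 0; Posz 0; Posz 0], [:: Posz 0; Posz 1; Posz 0; Posz 0], [:: Negz 0; Posz 1; Posz 0; Posz 0], [:: Posz 1; Posz 0; Posz 0; Posz 0]);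
  ([:: Posz 0; Posz 1; Posz 0; Posz 0], [:: Posz 0; Negz 0; Posz 0; Posz 0], [:: Posz 1; Posz 1; Posz 0; Posz 0], [:: Posz 0; Negz 0; Posz 0; Posz 0]);
  ([:: Posz 1; Negz 0; Posz 0; Posz 0], [:: Negz 0; Posz 0; Posz 0; Posz 0], [:: Posz 0; Negz 0; Posz 0; Posz 0], [:: Posz 0; Posz 1; Posz 0; Posz 0]);
  ([:: Posz 1; Posz 0; Posz 0; Posz 0], [:: Negz 0; Posz 0; Posz 0; Posz 0], [:: Posz 0; Negz 0; Posz 0; Posz 0], [:: Negz 0; Posz 1; Posz 0; Posz 0]);
  ([:: Posz 0; Negz 0; Posz 0; Posz 0], [:: Negz 0; Posz 1; Posz 0; Posz 0], [:: Negz 0; Negz 0; Posz 0; Posz 0], [:: Posz 0; Posz 1; Posz 0; Posz 0])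
].
Definition L5 : seq mat := [::
  ([:: Posz 1; Posz 0; Posz 0; Posz 0; Posz 0], [:: Posz 0; Posz 0; Posz 0; Posz 0; Posz 0], [:: Posz 0; Posz 0; Posz 0; Posz 0; Posz 0], [:: Posz 1; Posz 0; Posz 0; Posz 0; Posz 0]);
  ([:: Posz 0; Posz 1; Posz 0; Posz 0; Posz 0], [:: Posz 1; Posz 0; Posz 0; Posz 0; Posz 0], [:: Posz 0; Posz 0; Posz 0; Posz 0; Posz 0], [:: Posz 1; Posz 0; Posz 0; Posz 0; Posz 0]);
  ([:: Posz 0; Posz 0; Posz 0; Posz 0; Posz 0], [:: Posz 1; Posz 1; Posz 1; Posz 1; Posz 0], [:: Posz 1; Posz 0; Posz 0; Posz 0; Posz 0], [:: Posz 0; Posz 0; Posz 0; Posz 0; Posz 0]);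
  ([:: Posz 0; Posz 0; Posz 1; Posz 0; Posz 0], [:: Posz 1; Posz 1; Posz 0; Posz 0; Posz 0], [:: Posz 0; Posz 0; Posz 0; Posz 0; Posz 0], [:: Posz 1; Posz 0; Posz 0; Posz 0; Posz 0]);
  ([:: Posz 0; Posz 0; Posz 0; Posz 0; Posz 0], [:: Posz 1; Posz 1; Posz 1; Posz 1; Posz 0], [:: Posz 0; Posz 1; Posz 0; Posz 0; Posz 0], [:: Posz 1; Posz 0; Posz 0; Posz 0; Posz 0]);
  ([:: Posz 1; Posz 0; Posz 0; Posz 0; Posz 0], [:: Negz 0; Posz 0; Posz 0; Posz 0; Posz 0], [:: Posz 1; Posz 0; Posz 0; Posz 0; Posz 0], [:: Posz 0; Posz 0; Posz 0; Posz 0; Posz 0]);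
  ([:: Posz 0; Posz 0; Posz 0; Posz 1; Posz 0], [:: Posz 1; Posz 1; Posz 1; Posz 0; Posz 0], [:: Posz 0; Posz 0; Posz 0; Posz 0; Posz 0], [:: Posz 1; Posz 0; Posz 0; Posz 0; Posz 0]);
  ([:: Posz 0; Posz 0; Posz 0; Posz 0; Posz 0], [:: Posz 1; Posz 1; Posz 1; Posz 1; Posz 0], [:: Posz 0; Posz 0; Posz 1; Posz 0; Posz 0], [:: Posz 1; Posz 1; Posz 0; Posz 0; Posz 0]);
  ([:: Posz 0; Posz 1; Posz 0; Posz 0; Posz 0], [:: Posz 0; Posz 0; Posz 0; Posz 0; Posz 0], [:: Posz 0; Posz 1; Posz 0; Posz 0; Posz 0], [:: Posz 1; Posz 0; Posz 0; Posz 0; Posz 0]);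
  ([:: Posz 1; Posz 1; Posz 0; Posz 0; Posz 0], [:: Posz 0; Negz 0; Posz 0; Posz 0; Posz 0], [:: Posz 1; Posz 0; Posz 0; Posz 0; Posz 0], [:: Posz 0; Posz 0; Posz 0; Posz 0; Posz 0]);
  ([:: Posz 1; Posz 1; Posz 1; Posz 1; Posz 0], [:: Posz 0; Posz 0; Posz 0; Posz 0; Posz 0], [:: Posz 1; Posz 0; Posz 0; Posz 0; Posz 0], [:: Negz 0; Posz 0; Posz 0; Posz 0; Posz 0]);
  ([:: Negz 0; Negz 0; Negz 0; Negz 0; Posz 0], [:: Posz 1; Posz 1; Posz 1; Posz 1; Posz 0], [:: Posz 0; Posz 0; Posz 0; Posz 0; Posz 0], [:: Posz 1; Posz 0; Posz 0; Posz 0; Posz 0]);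
  ([:: Posz 0; Posz 0; Posz 0; Posz 0; Posz 0], [:: Posz 1; Posz 1; Posz 1; Posz 1; Posz 0], [:: Posz 0; Posz 0; Posz 0; Posz 1; Posz 0], [:: Posz 1; Posz 1; Posz 1; Posz 0; Posz 0]);
  ([:: Posz 0; Posz 0; Posz 1; Posz 0; Posz 0], [:: Posz 0; Posz 1; Posz 0; Posz 0; Posz 0], [:: Posz 0; Posz 0; Posz 1; Posz 0; Posz 0], [:: Posz 1; Posz 1; Posz 0; Posz 0; Posz 0]);
  ([:: Posz 0; Posz 1; Posz 1; Posz 0; Posz 0], [:: Posz 1; Posz 0; Posz 0; Posz 0; Posz 0], [:: Posz 0; Posz 1; Posz 0; Posz 0; Posz 0], [:: Posz 1; Posz 0; Posz 0; Posz 0; Posz 0]);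
  ([:: Negz 0; Posz 0; Posz 0; Posz 0; Posz 0], [:: Posz 1; Posz 1; Posz 1; Posz 1; Posz 0], [:: Posz 0; Posz 1; Posz 0; Posz 0; Posz 0], [:: Posz 0; Posz 0; Posz 0; Posz 0; Posz 0]);
  ([:: Posz 1; Posz 1; Posz 1; Posz 0; Posz 0], [:: Posz 0; Posz 0; Negz 0; Posz 0; Posz 0], [:: Posz 1; Posz 0; Posz 0; Posz 0; Posz 0], [:: Posz 0; Posz 0; Posz 0; Posz 0; Posz 0]);
  ([:: Posz 1; Posz 1; Posz 1; Posz 1; Posz 0], [:: Posz 0; Posz 0; Posz 0; Posz 0; Posz 0], [:: Posz 1; Posz 1; Posz 0; Posz 0; Posz 0], [:: Posz 0; Negz 0; Posz 0; Posz 0; Posz 0]);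
  ([:: Posz 0; Posz 0; Posz 0; Posz 0; Posz 0], [:: Negz 0; Posz 0; Posz 0; Posz 0; Posz 0], [:: Posz 1; Posz 0; Posz 0; Posz 0; Posz 0], [:: Negz 0; Posz 0; Posz 0; Posz 0; Posz 0]);
  ([:: Posz 0; Posz 0; Posz 0; Posz 1; Posz 0], [:: Posz 0; Posz 1; Posz 1; Posz 0; Posz 0], [:: Posz 0; Posz 0; Posz 0; Posz 1; Posz 0], [:: Posz 1; Posz 1; Posz 1; Posz 0; Posz 0]);
  ([:: Posz 0; Posz 0; Posz 1; Posz 1; Posz 0], [:: Posz 1; Posz 1; Posz 1; Posz 0; Posz 0], [:: Posz 0; Posz 0; Posz 1; Posz 0; Posz 0], [:: Posz 1; Posz 1; Posz 0; Posz 0; Posz 0]);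
  ([:: Posz 0; Negz 0; Posz 0; Posz 0; Posz 0], [:: Posz 0; Posz 1; Posz 1; Posz 1; Posz 0], [:: Posz 0; Posz 0; Posz 1; Posz 0; Posz 0], [:: Posz 0; Posz 1; Posz 0; Posz 0; Posz 0]);
  ([:: Posz 0; Posz 1; Posz 1; Posz 1; Posz 0], [:: Posz 1; Posz 1; Posz 0; Posz 0; Posz 0], [:: Posz 0; Posz 1; Posz 0; Posz 0; Posz 0], [:: Posz 1; Posz 0; Posz 0; Posz 0; Posz 0]);
  ([:: Negz 0; Posz 0; Posz 0; Posz 0; Posz 0], [:: Posz 1; Posz 1; Posz 1; Posz 1; Posz 0], [:: Posz 0; Posz 1; Posz 1; Posz 0; Posz 0], [:: Posz 1; Posz 0; Posz 0; Posz 0; Posz 0]);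
  ([:: Posz 1; Posz 1; Posz 1; Posz 1; Posz 0], [:: Posz 0; Posz 0; Posz 0; Posz 0; Posz 0], [:: Posz 1; Posz 1; Posz 1; Posz 0; Posz 0], [:: Posz 0; Posz 0; Negz 0; Posz 0; Posz 0]);
  ([:: Posz 0; Posz 1; Posz 0; Posz 0; Posz 0], [:: Posz 0; Negz 0; Posz 0; Posz 0; Posz 0], [:: Posz 1; Posz 1; Posz 0; Posz 0; Posz 0], [:: Posz 0; Negz 0; Posz 0; Posz 0; Posz 0]);
  ([:: Posz 1; Posz 0; Posz 0; Posz 0; Posz 0], [:: Negz 0; Negz 0; Posz 0; Posz 0; Posz 0], [:: Posz 1; Posz 0; Posz 0; Posz 0; Posz 0], [:: Negz 0; Posz 0; Posz 0; Posz 0; Posz 0]);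
  ([:: Negz 0; Negz 0; Negz 0; Posz 0; Posz 0], [:: Posz 1; Posz 1; Posz 2; Posz 1; Posz 0], [:: Posz 0; Posz 0; Posz 0; Posz 1; Posz 0], [:: Posz 1; Posz 1; Posz 1; Posz 0; Posz 0]);
  ([:: Posz 0; Posz 0; Negz 0; Posz 0; Posz 0], [:: Posz 0; Posz 0; Posz 1; Posz 1; Posz 0], [:: Posz 0; Posz 0; Posz 0; Posz 1; Posz 0], [:: Posz 0; Posz 1; Posz 1; Posz 0; Posz 0]);
  ([:: Negz 0; Negz 0; Posz 0; Posz 0; Posz 0], [:: Posz 1; Posz 2; Posz 1; Posz 1; Posz 0], [:: Posz 0; Posz 0; Posz 1; Posz 0; Posz 0], [:: Posz 1; Posz 1; Posz 0; Posz 0; Posz 0]);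
  ([:: Posz 0; Negz 0; Posz 0; Posz 0; Posz 0], [:: Posz 0; Posz 1; Posz 1; Posz 1; Posz 0], [:: Posz 0; Posz 0; Posz 1; Posz 1; Posz 0], [:: Posz 1; Posz 1; Posz 1; Posz 0; Posz 0]);
  ([:: Negz 0; Posz 0; Posz 0; Posz 0; Posz 0], [:: Posz 1; Posz 1; Posz 1; Posz 1; Posz 0], [:: Posz 0; Posz 1; Posz 1; Posz 1; Posz 0], [:: Posz 1; Posz 1; Posz 0; Posz 0; Posz 0]);
  ([:: Posz 0; Posz 1; Posz 1; Posz 0; Posz 0], [:: Posz 0; Posz 0; Negz 0; Posz 0; Posz 0], [:: Posz 1; Posz 1; Posz 1; Posz 0; Posz 0], [:: Posz 0; Posz 0; Negz 0; Posz 0; Posz 0]);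
  ([:: Posz 1; Posz 1; Posz 1; Posz 0; Posz 0], [:: Posz 0; Negz 0; Negz 0; Posz 0; Posz 0], [:: Posz 1; Posz 1; Posz 0; Posz 0; Posz 0], [:: Posz 0; Negz 0; Posz 0; Posz 0; Posz 0]);
  ([:: Posz 0; Posz 1; Posz 1; Posz 1; Posz 0], [:: Posz 1; Posz 0; Posz 0; Posz 0; Posz 0], [:: Posz 0; Posz 1; Posz 0; Posz 0; Posz 0], [:: Posz 0; Negz 0; Posz 0; Posz 0; Posz 0]);
  ([:: Posz 1; Posz 1; Posz 0; Posz 0; Posz 0], [:: Negz 0; Negz 0; Negz 0; Posz 0; Posz 0], [:: Posz 1; Posz 0; Posz 0; Posz 0; Posz 0], [:: Negz 0; Posz 0; Posz 0; Posz 0; Posz 0]);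
  ([:: Posz 1; Posz 1; Posz 1; Posz 1; Posz 0], [:: Negz 0; Negz 0; Negz 0; Negz 0; Posz 0], [:: Posz 1; Posz 0; Posz 0; Posz 0; Posz 0], [:: Negz 0; Negz 0; Posz 0; Posz 0; Posz 0]);
  ([:: Posz 0; Negz 0; Negz 0; Posz 0; Posz 0], [:: Posz 0; Posz 1; Posz 1; Posz 1; Posz 0], [:: Posz 0; Posz 0; Posz 0; Posz 1; Posz 0], [:: Posz 1; Posz 1; Posz 1; Posz 0; Posz 0]);
  ([:: Posz 0; Posz 0; Negz 0; Posz 0; Posz 0], [:: Posz 0; Posz 0; Posz 1; Posz 1; Posz 0], [:: Negz 0; Negz 0; Negz 0; Posz 0; Posz 0], [:: Posz 1; Posz 1; Posz 2; Posz 1; Posz 0]);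
  ([:: Posz 0; Negz 0; Posz 0; Posz 0; Posz 0], [:: Posz 0; Posz 1; Posz 1; Posz 1; Posz 0], [:: Negz 0; Negz 0; Posz 0; Posz 0; Posz 0], [:: Posz 1; Posz 2; Posz 1; Posz 1; Posz 0]);
  ([:: Posz 0; Posz 0; Posz 1; Posz 1; Posz 0], [:: Posz 0; Posz 1; Posz 0; Posz 0; Posz 0], [:: Posz 0; Posz 1; Posz 1; Posz 1; Posz 0], [:: Posz 1; Posz 1; Posz 0; Posz 0; Posz 0]);
  ([:: Posz 1; Posz 1; Posz 2; Posz 1; Posz 0], [:: Posz 0; Posz 0; Negz 0; Negz 0; Posz 0], [:: Posz 1; Posz 1; Posz 1; Posz 0; Posz 0], [:: Posz 0; Posz 0; Negz 0; Posz 0; Posz 0]);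
  ([:: Posz 0; Posz 0; Posz 1; Posz 1; Posz 0], [:: Posz 0; Posz 1; Posz 0; Posz 0; Posz 0], [:: Posz 0; Posz 1; Posz 1; Posz 0; Posz 0], [:: Posz 0; Posz 0; Negz 0; Posz 0; Posz 0]);
  ([:: Posz 1; Posz 2; Posz 1; Posz 1; Posz 0], [:: Posz 0; Negz 0; Negz 0; Negz 0; Posz 0], [:: Posz 1; Posz 1; Posz 0; Posz 0; Posz 0], [:: Posz 0; Negz 0; Posz 0; Posz 0; Posz 0]);
  ([:: Posz 0; Posz 1; Posz 1; Posz 1; Posz 0], [:: Posz 1; Posz 0; Posz 0; Posz 0; Posz 0], [:: Posz 1; Posz 1; Posz 1; Posz 0; Posz 0], [:: Posz 0; Negz 0; Negz 0; Posz 0; Posz 0]);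
  ([:: Posz 1; Posz 1; Posz 1; Posz 1; Posz 0], [:: Negz 0; Negz 0; Negz 0; Negz 0; Posz 0], [:: Posz 1; Posz 1; Posz 0; Posz 0; Posz 0], [:: Negz 0; Negz 0; Negz 0; Posz 0; Posz 0]);
  ([:: Posz 0; Posz 0; Negz 0; Posz 0; Posz 0], [:: Posz 0; Posz 0; Posz 1; Posz 1; Posz 0], [:: Posz 0; Negz 0; Negz 0; Posz 0; Posz 0], [:: Posz 0; Posz 1; Posz 1; Posz 1; Posz 0]);
  ([:: Negz 0; Negz 0; Negz 0; Posz 0; Posz 0], [:: Posz 0; Posz 1; Posz 1; Posz 1; Posz 0], [:: Negz 0; Negz 0; Posz 0; Posz 0; Posz 0], [:: Posz 1; Posz 2; Posz 1; Posz 1; Posz 0]);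
  ([:: Negz 0; Posz 0; Posz 0; Posz 1; Posz 0], [:: Posz 1; Posz 1; Posz 1; Posz 0; Posz 0], [:: Posz 0; Posz 1; Posz 1; Posz 1; Posz 0], [:: Posz 1; Posz 1; Posz 0; Posz 0; Posz 0]);
  ([:: Negz 0; Negz 0; Negz 0; Posz 0; Posz 0], [:: Posz 0; Posz 1; Posz 1; Posz 1; Posz 0], [:: Posz 0; Posz 0; Posz 1; Posz 1; Posz 0], [:: Posz 0; Posz 1; Posz 0; Posz 0; Posz 0]);
  ([:: Posz 0; Posz 0; Posz 1; Posz 1; Posz 0], [:: Posz 0; Posz 1; Posz 0; Posz 0; Posz 0], [:: Posz 1; Posz 1; Posz 2; Posz 1; Posz 0], [:: Posz 0; Posz 0; Negz 0; Negz 0; Posz 0]);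
  ([:: Posz 0; Posz 1; Posz 1; Posz 1; Posz 0], [:: Posz 1; Posz 0; Posz 0; Posz 0; Posz 0], [:: Posz 1; Posz 2; Posz 1; Posz 1; Posz 0], [:: Posz 0; Negz 0; Negz 0; Negz 0; Posz 0]);
  ([:: Posz 0; Negz 0; Negz 0; Negz 0; Posz 0], [:: Negz 0; Posz 0; Posz 0; Posz 1; Posz 0], [:: Posz 0; Negz 0; Negz 0; Posz 0; Posz 0], [:: Posz 0; Posz 1; Posz 1; Posz 1; Posz 0]);
  ([:: Negz 0; Negz 1; Negz 0; Negz 0; Posz 0], [:: Posz 0; Posz 1; Posz 1; Posz 1; Posz 0], [:: Negz 0; Negz 0; Posz 0; Posz 0; Posz 0], [:: Posz 1; Posz 2; Posz 1; Posz 1; Posz 0]);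
  ([:: Posz 0; Negz 0; Negz 0; Negz 0; Posz 0], [:: Negz 0; Posz 0; Posz 0; Posz 1; Posz 0], [:: Negz 0; Negz 0; Negz 0; Posz 0; Posz 0], [:: Posz 0; Posz 1; Posz 1; Posz 1; Posz 0]);
  ([:: Negz 0; Negz 0; Negz 0; Posz 0; Posz 0], [:: Posz 0; Posz 1; Posz 1; Posz 1; Posz 0], [:: Negz 0; Posz 0; Posz 0; Posz 1; Posz 0], [:: Posz 1; Posz 1; Posz 1; Posz 0; Posz 0]);
  ([:: Posz 0; Posz 1; Posz 1; Posz 1; Posz 0], [:: Posz 0; Posz 0; Negz 0; Negz 0; Posz 0], [:: Posz 1; Posz 2; Posz 1; Posz 1; Posz 0], [:: Posz 0; Negz 0; Negz 0; Negz 0; Posz 0]);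
  ([:: Posz 1; Posz 0; Negz 0; Posz 0; Posz 0], [:: Negz 0; Negz 0; Posz 0; Posz 0; Posz 0], [:: Posz 0; Negz 0; Negz 0; Posz 0; Posz 0], [:: Posz 0; Posz 1; Posz 1; Posz 1; Posz 0]);
  ([:: Posz 1; Posz 1; Posz 0; Posz 0; Posz 0], [:: Negz 0; Negz 0; Negz 0; Posz 0; Posz 0], [:: Posz 0; Negz 0; Negz 0; Negz 0; Posz 0], [:: Negz 0; Posz 0; Posz 0; Posz 1; Posz 0]);
  ([:: Posz 0; Negz 0; Negz 0; Negz 0; Posz 0], [:: Negz 0; Posz 0; Posz 0; Posz 1; Posz 0], [:: Negz 0; Negz 1; Negz 0; Negz 0; Posz 0], [:: Posz 0; Posz 1; Posz 1; Posz 1; Posz 0])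
].
Definition Ls n := if n == 2%N then L2 else if n == 3%N then L3 else if n == 4%N then L4 else L5.
Lemma chk_all n : (n \in [:: 2; 3; 4; 5])%N -> chk n (gens n) (Ls n) && (Im n \in Ls n).
Proof.
rewrite !inE => /or4P[] /eqP ->; vm_compute; reflexivity.
Qed.
Lemma inv_of_mul (A B : 'M[C]_2) : A *m B = 1%:M -> invmx A = B.
Proof.
move=> H; have [uA _] := mulmx1_unit H.
by rewrite -[RHS]mul1mx -(mulVmx uA) -mulmxA H mulmx1.
Qed.

Lemma invmxM2 (M N : 'M[C]_2) : M \in unitmx -> N \in unitmx ->
  invmx (M *m N) = invmx N *m invmx M.
Proof.
move=> uM uN; apply: inv_of_mul.
by rewrite mulmxA -(mulmxA M) mulmxV // mulmx1 mulmxV.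
Qed.

Section IfDir.
Variables (z : C) (n : nat).
Hypothesis Hp : n.-primitive_root z.
Hypothesis Hn : (n \in [:: 2; 3; 4; 5])%N.

Let zn : z ^+ n = 1. Proof. exact: prim_expr_order. Qed.
Let n_gt0 : (0 < n)%N. Proof. exact: prim_order_gt0 Hp. Qed.
Let zinv : z^-1 = z ^+ n.-1.
Proof.
have H : z ^+ n.-1 * z = 1 by rewrite -exprSr prednK.
have zu : z \is a GRing.unit.
  by apply/unitrPr; exists (z ^+ n.-1); rewrite mulrC.
by rewrite -[LHS]mul1r -H mulrK.
Qed.

Let ev_zer : ev z (zer n) = 0. Proof. exact: ev_nseq0. Qed.

Lemma evm_Rm : evm z (Rm n) = Rz z.
Proof. by rewrite Rz_mk2 /evm /Rm /Rim /Sm /Sim /Im !ev_mono ev_zer /= !mul1r expr1 expr0. Qed.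
Lemma evm_Sm : evm z (Sm n) = Sz z.
Proof. by rewrite Sz_mk2 /evm /Rm /Rim /Sm /Sim /Im !ev_mono ev_zer /= !mul1r expr0 zinv mulN1r. Qed.
Let zw : z * z ^+ n.-1 = 1. Proof. by rewrite -exprS prednK. Qed.
Let wz : z ^+ n.-1 * z = 1. Proof. by rewrite mulrC zw. Qed.

Lemma evm_Rim : evm z (Rim n) = invmx (Rz z).
Proof.
apply/esym/inv_of_mul; rewrite Rz_mk2 /evm /Rim !ev_mono ev_zer mk2_mul -mk2_1.
congr mk2; rewrite /= ?expr0 ?expr1 ?mul1r ?mulN1r ?mulr0 ?mul0r ?addr0 ?add0r ?mulr1 //.
by rewrite mulrN zw addNr.
Qed.
Lemma evm_Sim : evm z (Sim n) = invmx (Sz z).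
Proof.
apply/esym/inv_of_mul; rewrite Sz_mk2 /evm /Sim !ev_mono ev_zer mk2_mul -mk2_1.
congr mk2; rewrite /= ?expr0 ?expr1 ?mul1r ?mulN1r ?mulr0 ?mul0r ?addr0 ?add0r ?mulr1 //.
by rewrite mulrN mulNr opprK zinv wz.
Qed.

Let E := map (evm z) (Ls n).

Definition Nsc (c : C) := exists (b : nat) (k : int), c = (-1) ^+ b * z ^ k.
Definition perm_ok (M : 'M[C]_2) :=
  forall A, A \in E -> exists2 B, B \in E & exists2 c, Nsc c & M *m A = c *: B.
Definition good M := [/\ M \in unitmx, perm_ok M & perm_ok (invmx M)].

Let z0 : z != 0.
Proof. by apply/eqP => z0; move: zn; rewrite z0 expr0n; case: (n) n_gt0 => // m _ /eqP; rewrite eq_sym oner_eq0. Qed.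

Lemma NscM c d : Nsc c -> Nsc d -> Nsc (c * d).
Proof.
move=> [b [k ->]] [b' [k' ->]]; exists (b + b')%N, (k + k').
by rewrite exprD expfzDr // mulrACA.
Qed.

Lemma perm_okM M N : perm_ok M -> perm_ok N -> perm_ok (M *m N).
Proof.
move=> HM HN A Ain; have [B Bin [c Hc HB]] := HN A Ain.
have [B' B'in [c' Hc' HB']] := HM B Bin.
exists B' => //; exists (c * c'); first exact: NscM.
by rewrite -mulmxA HB -scalemxAr HB' scalerA.
Qed.

Lemma perm_ok_gen g : g \in gens n -> perm_ok (evm z g).
Proof.
move=> gin A /mapP [A0 A0in ->].
have [B Bin [b [k H]]] := chk_sound Hp Hn (andP (chk_all Hn)).1 gin A0in.
exists (evm z B); first by apply: map_f.
by exists ((-1) ^+ b * z ^+ k) => //; exists b, k.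
Qed.

Lemma good1 : good 1%:M.
Proof.
split; first by rewrite unitmx1.
  by move=> A Ain; exists A => //; exists 1; [exists 0%N, 0; rewrite !expr0 mulr1 | rewrite mul1mx scale1r].
rewrite invmx1 => A Ain; exists A => //.
by exists 1; [exists 0%N, 0; rewrite !expr0 mulr1 | rewrite mul1mx scale1r].
Qed.

Lemma goodM M N : good M -> good N -> good (M *m N).
Proof.
move=> [uM pM piM] [uN pN piN]; split; first by rewrite unitmx_mul uM.
  exact: perm_okM.
by rewrite invmxM2 //; apply: perm_okM.
Qed.

Lemma goodV M : good M -> good (invmx M).
Proof. by move=> [uM pM piM]; split; rewrite ?unitmx_inv ?invmxK. Qed.

Lemma goodR : good (Rz z).
Proof.
have H : Rz z *m invmx (Rz z) = 1%:M.
  rewrite -evm_Rim Rz_mk2 /evm /Rim !ev_mono ev_zer mk2_mul -mk2_1.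
  congr mk2; rewrite /= ?expr0 ?expr1 ?mul1r ?mulN1r ?mulr0 ?mul0r ?addr0 ?add0r ?mulr1 //.
  by rewrite mulrN zw addNr.
split; first by case: (mulmx1_unit H).
  by rewrite -evm_Rm; apply: perm_ok_gen; rewrite !inE eqxx.
by rewrite -evm_Rim; apply: perm_ok_gen; rewrite !inE eqxx orbT.
Qed.

Lemma goodS : good (Sz z).
Proof.
have H : Sz z *m invmx (Sz z) = 1%:M.
  rewrite -evm_Sim Sz_mk2 /evm /Sim !ev_mono ev_zer mk2_mul -mk2_1.
  congr mk2; rewrite /= ?expr0 ?expr1 ?mul1r ?mulN1r ?mulr0 ?mul0r ?addr0 ?add0r ?mulr1 //.
  by rewrite mulrN mulNr opprK zinv wz.
split; first by case: (mulmx1_unit H).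
  by rewrite -evm_Sm; apply: perm_ok_gen; rewrite !inE eqxx !orbT.
by rewrite -evm_Sim; apply: perm_ok_gen; rewrite !inE eqxx !orbT.
Qed.

Lemma good_Gz M : in_Gz z M -> good M.
Proof.
elim => [|||M1 M2 _ H1 _ H2|M1 _ H1].
- exact: good1.
- exact: goodR.
- exact: goodS.
- exact: goodM.
- exact: goodV.
Qed.

Lemma if_dir : PSLq_spec_finite z.
Proof.
exists E => M /good_Gz [uM pM _].
have Iin : 1%:M \in E.
  have -> : (1%:M : 'M[C]_2) = evm z (Im n).
    by rewrite /evm /Im !ev_mono ev_zer /= expr0 mulr1 mk2_1.
  by apply: map_f; case/andP: (chk_all Hn).
have [B Bin [c [b [k Hc]] HB]] := pM _ Iin.
exists B => //.
have c0 : c != 0 by rewrite Hc mulf_eq0 negb_or signr_eq0 expfz_eq0 negb_and z0 orbT.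
have uB : B \in unitmx.
  have -> : B = c^-1 *: M by rewrite mulmx1 in HB; rewrite HB scalerA mulVf // scale1r.
  by rewrite unitmxZ // unitfE invr_eq0.
rewrite mulmx1 in HB; rewrite HB -scalemxAl mulmxV // scalemx1.
by exists (odd b), k; rewrite Hc signr_odd.
Qed.
End IfDir.
From mathcomp Require Import algC cyclotomic.

Local Notation PhiQ n := (map_poly (intr : int -> rat) 'Phi_n).

Lemma root_Phi_C n (x : C) : n.-primitive_root x ->
  root (map_poly (intr : int -> C) 'Phi_n) x.
Proof.
move=> Hp; have n_gt0 := prim_order_gt0 Hp.
have H := congr1 (fun p => (map_poly (intr : int -> C) p).[x]) (prod_Cyclotomic n_gt0).
rewrite /= rmorph_prod horner_prod rmorphB rmorph1 /= map_polyXn !hornerE in H.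
rewrite (prim_expr_order Hp) subrr in H.
move/eqP: H; rewrite prodf_seq_eq0 => /hasP [d din /= /eqP Hd].
have d_gt0 : (0 < d)%N by move: din; rewrite -dvdn_divisors // => /dvdn_gt0; apply.
have Hd1 : x ^+ d = 1.
  have H := congr1 (fun p => (map_poly (intr : int -> C) p).[x]) (prod_Cyclotomic d_gt0).
  rewrite /= rmorph_prod horner_prod rmorphB rmorph1 /= map_polyXn !hornerE in H.
  rewrite (big_rem d) ?divisors_id //= Hd mul0r in H.
  by apply/eqP; rewrite -subr_eq0 -H.
have: (n %| d)%N by rewrite (prim_order_dvd Hp) Hd1.
move: din; rewrite -dvdn_divisors // => dn nd.
suff -> : n = d by apply/rootP.
by apply/eqP; rewrite eqn_dvd dn nd.
Qed.

Lemma PhiQ_dvd n (q : {poly rat}) : (0 < n)%N -> ~~ coprimep (PhiQ n) q -> PhiQ n %| q.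
Proof.
move=> n_gt0 ncop.
set g := gcdp (PhiQ n) q.
have Phi0 : PhiQ n != 0.
  rewrite -size_poly_eq0 size_map_inj_poly ?rmorph0 ?size_poly_eq0 ?monic_neq0 ?Cyclotomic_monic //.
  exact: intr_inj.
have g1 : size (map_poly (ratr : rat -> algC) g) != 1%N.
  by rewrite size_map_poly.
have [a ra] := closed_rootP _ g1.
have [z0 pz0] := C_prim_root_exists n_gt0.
have PhiC : map_poly (ratr : rat -> algC) (PhiQ n) = cyclotomic z0 n.
  rewrite -(Cintr_Cyclotomic pz0) -map_poly_comp; apply: eq_map_poly => b /=.
  by rewrite rmorph_int.
have ra' : root (map_poly (ratr : rat -> algC) (PhiQ n)) a.
  have /dvdpP [r Hr] : g %| PhiQ n by apply: dvdp_gcdl.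
  by rewrite Hr rmorphM rootM ra orbT.
have pa : n.-primitive_root a by rewrite -(root_cyclotomic pz0) -PhiC.
have [p0 [Dp0 _] Hp0] := minCpolyP a.
have E1 : map_poly (ratr : rat -> algC) p0 = map_poly ratr (PhiQ n).
  rewrite -Dp0 (minCpoly_cyclotomic pa).
  by rewrite PhiC -(Cintr_Cyclotomic pa) (Cintr_Cyclotomic pz0).
have E : p0 = PhiQ n.
  move: E1; apply: map_inj_poly; [exact: fmorph_inj | exact: rmorph0].
have : p0 %| g by rewrite -Hp0.
rewrite E => /dvdp_trans; apply; exact: dvdp_gcdr.
Qed.

Lemma PhiQ_root_C n (x : C) : n.-primitive_root x -> root (map_poly (ratr : rat -> C) (PhiQ n)) x.
Proof.
move=> Hp; have := root_Phi_C Hp.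
rewrite -map_poly_comp; congr (root _ x); apply: eq_map_poly => b /=.
by rewrite rmorph_int.
Qed.

Lemma galois_C n (x y : C) (p : {poly rat}) : n.-primitive_root x -> n.-primitive_root y ->
  root (map_poly (ratr : rat -> C) p) x -> root (map_poly (ratr : rat -> C) p) y.
Proof.
move=> px py rx.
have n_gt0 := prim_order_gt0 px.
case cop: (coprimep (PhiQ n) p).
  have := coprimep_root (_ : coprimep (map_poly (ratr : rat -> C) (PhiQ n)) (map_poly ratr p)) (PhiQ_root_C px).
  by rewrite coprimep_map cop => /(_ isT); rewrite -/(root _ _) rx.
have /PhiQ_dvd := negbT cop => /(_ n_gt0) /divpK <-.
by rewrite rmorphM rootM (PhiQ_root_C py) orbT.
Qed.
From Stdlib Require Reals.
Local Notation PI := Rtrigo1.PI.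
Local Notation cos := Rtrigo_def.cos.
Local Notation sin := Rtrigo_def.sin.
Local Notation RR := Rdefinitions.R.

Lemma IZR2 : Rdefinitions.IZR (BinNums.Zpos (BinNums.xO BinNums.xH)) = 2 :> RR. Proof. by rewrite IZRposE INRE. Qed.
Lemma IZR3 : Rdefinitions.IZR (BinNums.Zpos (BinNums.xI BinNums.xH)) = 3 :> RR. Proof. by rewrite IZRposE INRE. Qed.

Lemma PI_gt0 : 0 < PI :> RR. Proof. exact/RltP/Rtrigo1.PI_RGT_0. Qed.

Definition th (n : nat) : RR := 2 * PI / n%:R.

Lemma th_mul n : (0 < n)%N -> th n *+ n = 2 * PI.
Proof.
move=> n0; rewrite /th -[_ *+ n]mulr_natr divfK // pnatr_eq0; lia.
Qed.

Lemma cos2PI : cos (2 * PI) = 1. Proof. by rewrite -IZR2 Rtrigo1.cos_2PI. Qed.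
Lemma sin2PI : sin (2 * PI) = 0. Proof. by rewrite -IZR2 Rtrigo1.sin_2PI. Qed.
Lemma sc1 x : sin x ^+ 2 + cos x ^+ 2 = 1.
Proof. by have := Rtrigo1.sin2_cos2 x; rewrite /RIneq.Rsqr !RmultE RplusE -!expr2. Qed.

Lemma cos_th_ge n : (6 <= n)%N -> 1 <= 2 * cos (th n).
Proof.
move=> n6.
have Hn : 6 <= n%:R :> RR by rewrite (ler_nat RR 6 n).
have HP := PI_gt0.
have H0 : 0 <= th n by rewrite /th; apply: divr_ge0; [lra| lra].
have H1 : th n <= PI / 3.
  rewrite /th ler_pdivrMr ?(lt_le_trans _ Hn) //.
  rewrite mulrAC ler_pdivlMr //; nra.
have c3 : cos (PI / 3) = 1 / 2.
  by move: Rtrigo_calc.cos_PI3; rewrite !RdivE IZR3 R1E IZR2.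
have key : cos (PI / 3) <= cos (th n).
  apply/RleP; apply: Rtrigo1.cos_decr_1; apply/RleP; rewrite ?R0E; lra.
rewrite c3 in key; lra.
Qed.

Lemma cos_th_lt n k : (0 < k)%N -> (k < n)%N -> cos (th n *+ k) < 1.
Proof.
move=> k0 kn.
have Hk : 0 < k%:R :> RR by rewrite ltr0n.
have Hkn : k%:R < n%:R :> RR by rewrite ltr_nat.
have Hn : 0 < n%:R :> RR by rewrite ltr0n; lia.
have HP := PI_gt0.
set y := PI * (k%:R / n%:R).
have ex : th n *+ k = 2 * y.
  rewrite /y /th -[_ *+ k]mulr_natr; generalize PI => P.
  by rewrite -!mulrA [_^-1 * _]mulrC.
have Hq0 : 0 < k%:R / n%:R :> RR by apply: divr_gt0.
have Hq1 : k%:R / n%:R < 1 :> RR by rewrite ltr_pdivrMr // mul1r.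
have Hx0 : 0 < y by apply: mulr_gt0.
have Hx1 : y < PI by rewrite /y -[X in _ < X]mulr1 ltr_pM2l.
have Hs := Rtrigo1.sin_gt_0 _ (RltP Hx0) (RltP Hx1).
move/RltP: Hs; rewrite R0E => Hs.
have := Rtrigo1.cos_2a_sin y; rewrite !RminusE !RmultE IZR2 => E.
rewrite ex E R1E.
have : 0 < 2 * sin y * sin y by rewrite !mulr_gt0.
lra.
Qed.

Definition om (n : nat) : C := Complex (cos (th n)) (sin (th n)).

Lemma om_exp n k : om n ^+ k = Complex (cos (th n *+ k)) (sin (th n *+ k)).
Proof.
elim: k => [|k IH].
  by rewrite expr0 !mulr0n Rtrigo_def.cos_0 Rtrigo_def.sin_0.
rewrite exprS IH /om mulrS cosD sinD.
by apply/eqP; rewrite eq_complex /=; apply/andP; split; apply/eqP; ring.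
Qed.

Lemma om_unity n : (0 < n)%N -> om n ^+ n = 1.
Proof. by move=> n0; rewrite om_exp th_mul // cos2PI sin2PI. Qed.

Lemma om_prim n : (0 < n)%N -> n.-primitive_root (om n).
Proof.
move=> n0.
have un : n.-unity_root (om n) by rewrite unity_rootE om_unity.
have [m pm mn] := prim_order_exists n0 (om_unity n0).
have m0 := prim_order_gt0 pm.
have : m = n.
  apply/eqP; rewrite eqn_leq dvdn_leq //=; rewrite leqNgt; apply/negP => mlt.
  have := prim_expr_order pm; rewrite om_exp => /eqP; rewrite eq_complex /= => /andP [/eqP E _].
  by have := cos_th_lt m0 mlt; rewrite E ltxx.
by move=> E; move: pm; rewrite E.
Qed.

Lemma om_inv n : (om n)^-1 = Complex (cos (th n)) (- sin (th n)).
Proof.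
apply: mulr1_eq; rewrite /om.
have := sc1 (th n) => H.
apply/eqP; rewrite eq_complex /=; apply/andP; split; apply/eqP.
  by rewrite -H; ring.
by ring.
Qed.

Section WSec.
Local Open Scope complex_scope.

Fixpoint Wp (m : nat) : {poly rat} :=
  match m with
  | 0 => 0
  | S m1 => match m1 with
            | 0 => 1
            | S m2 => (1 + 'X + 'X^2) * Wp m1 - 'X^2 * Wp m2
            end
  end.
Definition w (x : C) m := (map_poly (ratr : rat -> C) (Wp m)).[x].

Lemma w0 x : w x 0 = 0. Proof. by rewrite /w /= rmorph0 horner0. Qed.
Lemma w1 x : w x 1 = 1. Proof. by rewrite /w /= rmorph1 hornerC. Qed.
Lemma w_rec x m : w x m.+2 = (1 + x + x ^+ 2) * w x m.+1 - x ^+ 2 * w x m.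
Proof.
rewrite /w [Wp m.+2]/= rmorphB !rmorphM !rmorphD rmorph1 /= map_polyX map_polyXn.
by rewrite !hornerE.
Qed.

Fixpoint u (t : RR) (m : nat) : RR :=
  match m with
  | 0 => 0
  | S m1 => match m1 with
            | 0 => 1
            | S m2 => t * u t m1 - u t m2
            end
  end.

Lemma u_ge t : 2 <= t -> forall m, m%:R <= u t m /\ u t m + 1 <= u t m.+1.
Proof.
move=> t2; elim => [|m [IH1 IH2]]; first by rewrite /= add0r; split.
have H1 : m.+1%:R <= u t m.+1 by rewrite [m.+1%:R]mulrSr; lra.
split => //.
have : 0 <= (t - 2) * u t m.+1.
  by apply: mulr_ge0; [lra | apply: le_trans H1].
move=> H; have -> : u t m.+2 = t * u t m.+1 - u t m by [].
rewrite mulrBl in H; lra.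
Qed.

Lemma tau_eq n : ((1 + 2 * cos (th n) : RR)%:C : C) = 1 + om n + (om n)^-1.
Proof.
rewrite om_inv /om; apply/eqP; rewrite eq_complex /=; apply/andP; split; apply/eqP; ring.
Qed.

Lemma om_neq0 n : om n != 0.
Proof.
apply/eqP => E.
have : om n * (om n)^-1 = 1.
  rewrite om_inv /om; apply/eqP; rewrite eq_complex /=.
  have := sc1 (th n) => H.
  by apply/andP; split; apply/eqP; [rewrite -H; ring | ring].
by rewrite E mul0r => /eqP; rewrite eq_sym oner_eq0.
Qed.

Lemma om_w n m : om n * w (om n) m =
  om n ^+ m * ((u (1 + 2 * cos (th n)) m)%:C : C).
Proof.
set a := om n; set t := 1 + 2 * cos (th n).
have at1 : a * (t%:C : C) = 1 + a + a ^+ 2.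
  rewrite /t tau_eq -/a mulrDr mulrDr mulfV ?om_neq0 //; ring.
suff : a * w a m = a ^+ m * (u t m)%:C /\ a * w a m.+1 = a ^+ m.+1 * (u t m.+1)%:C by case.
elim: m => [|m [IH0 IH1]].
  have -> : u t 0 = 0 by []; have -> : u t 1 = 1 by [].
  by rewrite w0 w1 rmorph0 rmorph1 !mulr0 expr1 !mulr1.
split => //.
rewrite w_rec.
transitivity ((1 + a + a ^+ 2) * (a * w a m.+1) - a ^+ 2 * (a * w a m)); first by ring.
have -> : u t m.+2 = t * u t m.+1 - u t m by [].
rewrite IH0 IH1 rmorphB rmorphM /=.
transitivity (a ^+ m * ((a * (t%:C : C)) * a * (u t m.+1)%:C) - a ^+ m * a ^+ 2 * (u t m)%:C).
  by rewrite !exprS at1; ring.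
by rewrite !exprS; ring.
Qed.

Lemma w_om_neq0 n d : (6 <= n)%N -> (0 < d)%N -> w (om n) d != 0.
Proof.
move=> n6 d0; apply/eqP => E.
have := om_w n d; rewrite E mulr0 => /esym /eqP; rewrite mulf_eq0 expf_eq0 (negPf (om_neq0 n)) andbF /=.
rewrite eq_complex /= eqxx andbT => /eqP ud.
have t2 : 2 <= 1 + 2 * cos (th n) by have := cos_th_ge n6; lra.
have [H _] := u_ge t2 d.
have : (0 : RR) < d%:R by rewrite ltr0n.
rewrite ud in H; lra.
Qed.

End WSec.

Definition mpow (M : 'M[C]_2) k := iter k (mulmx M) 1%:M.

Lemma mpow_add M i j : mpow M (i + j) = mpow M i *m mpow M j.
Proof.
elim: i => [|i IH]; first by rewrite add0n /= mul1mx.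
by rewrite addSn /mpow /= -/(mpow M (i + j)) -/(mpow M i) IH mulmxA.
Qed.

Lemma scalar_mk2 (c : C) : c%:M = mk2 c 0 0 c.
Proof.
by apply/matrixP => i j; rewrite !mxE; case: i => [[|[|i]] Hi] //; case: j => [[|[|j]] Hj].
Qed.

Section OnlyIf.
Variable z : C.
Hypothesis hz : z != 0.

Lemma in_Gz_pow M k : in_Gz z M -> in_Gz z (mpow M k).
Proof. by move=> HM; elim: k => [|k IH] /=; [exact: Gz_one | exact: Gz_mul]. Qed.

Lemma in_Gz_unit M : in_Gz z M -> M \in unitmx.
Proof.
elim => [|||M1 M2 _ H1 _ H2|M1 _ H1].
- exact: unitmx1.
- have H : Rz z *m mk2 z^-1 (- z^-1) 0 1 = 1%:M.
    by rewrite Rz_mk2 mk2_mul -mk2_1; congr mk2; field; apply: hz.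
  by case: (mulmx1_unit H).
- have H : Sz z *m mk2 0 1 (- z) 0 = 1%:M.
    by rewrite Sz_mk2 mk2_mul -mk2_1; congr mk2; rewrite ?mul0r ?mulr0 ?mul1r ?mulr1 ?addr0 ?add0r ?mulNr ?mulrN ?opprK ?mulVf ?oppr0.
  by case: (mulmx1_unit H).
- by rewrite unitmx_mul H1 H2.
- by rewrite unitmx_inv.
Qed.

Lemma Nz_neq0 M : in_Nz z M -> exists2 c : C, c != 0 & M = c%:M.
Proof.
move=> [b [k ->]]; exists ((-1) ^+ b * z ^ k) => //.
by rewrite mulf_eq0 negb_or signr_eq0 expfz_eq0 negb_and hz orbT.
Qed.

Lemma two_cosets (P Q A : 'M[C]_2) c1 c2 : c1 != 0 -> P *m invmx A = c1%:M ->
  Q *m invmx A = c2%:M -> Q = (c2 / c1) *: P.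
Proof.
move=> c10 H1 H2.
have u1 : (c1%:M : 'M[C]_2) \in unitmx by rewrite -scalemx1 unitmxZ ?unitmx1 // unitfE.
have uA : A \in unitmx by move: u1; rewrite -H1 unitmx_mul unitmx_inv => /andP[].
have EP : P = c1%:M *m A by rewrite -H1 mulmxKV.
have EQ : Q = c2%:M *m A by rewrite -H2 mulmxKV.
by rewrite EQ EP !mul_scalar_mx scalerA divfK.
Qed.

Variable s : seq 'M[C]_2.
Hypothesis Hs : forall M, in_Gz z M -> exists2 A, A \in s & in_Nz z (M *m invmx A).

Lemma pow_scalar M : in_Gz z M -> exists d, (0 < d)%N /\ exists c : C, mpow M d = c%:M.
Proof.
move=> HM.
have H : forall i : 'I_(size s).+1, exists j : 'I_(size s),
    in_Nz z (mpow M i *m invmx (nth 0 s j)).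
  move=> i; have [A Ain HA] := Hs (in_Gz_pow i HM).
  have Hi : (index A s < size s)%N by rewrite index_mem.
  by exists (Ordinal Hi); rewrite /= nth_index.
have [f Hf] := fin_all_exists H.
have : ~~ injectiveb f.
  apply/negP => /injectiveP inj; have := leq_card f inj.
  by rewrite !card_ord ltnn.
move/injectivePn => [i [j ij fij]].
wlog lij : i j ij fij / (i < j)%N.
  move=> Hw; case: (ltngtP i j) => [l|l|l]; first exact: (Hw i j).
    by apply: (Hw j i) => //; rewrite eq_sym.
  by move: ij; rewrite (val_inj l) eqxx.
have [c1 c10 E1] := Nz_neq0 (Hf i).
have [c2 c20 E2] := Nz_neq0 (Hf j).
rewrite fij in E1.
have Q := two_cosets c10 E1 E2.
exists (j - i)%N; split; first by rewrite subn_gt0.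
exists (c2 / c1).
have uP : mpow M i \in unitmx by apply: in_Gz_unit; apply: in_Gz_pow.
have Q' := Q; rewrite -(subnK (ltnW lij)) mpow_add in Q'.
by rewrite -[mpow M (j - i)](mulmxK uP) Q' -scalemxAl mulmxV // scalemx1.
Qed.

End OnlyIf.

Fixpoint gR (z : C) d := if d is d'.+1 then z * gR z d' + 1 else 0.

Lemma R_pow z d : mpow (Rz z) d = mk2 (z ^+ d) (gR z d) 0 1.
Proof.
elim: d => [|d IH]; first by rewrite /= mk2_1.
rewrite /mpow iterS -/(mpow _ d) IH Rz_mk2 mk2_mul /=; congr mk2; rewrite ?exprS; ring.
Qed.

Lemma gR1 d : gR 1 d = d%:R.
Proof. by elim: d => [|d IH] //=; rewrite IH mul1r -natr1. Qed.

Definition M3 z := Rz z *m (Rz z *m (Rz z *m Sz z)).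

Lemma M3_mk2 z : z != 0 -> M3 z = mk2 (1 + z + z ^+ 2) (- z ^+ 2) 1 0.
Proof.
move=> hz.
have RS : Rz z *m Sz z = mk2 1 (-1) 1 0.
  rewrite Rz_mk2 Sz_mk2 mk2_mul; congr mk2; rewrite ?mulr0 ?mul0r ?mulr1 ?mul1r ?addr0 ?add0r //.
  by rewrite mulrN mulfV.
rewrite /M3 RS !Rz_mk2 !mk2_mul; congr mk2; ring.
Qed.

Lemma M3_pow z m : z != 0 -> mpow (M3 z) m.+1 =
  mk2 (w z m.+2) (- z ^+ 2 * w z m.+1) (w z m.+1) (- z ^+ 2 * w z m).
Proof.
move=> hz; elim: m => [|m IH].
  rewrite /mpow /= mulmx1 M3_mk2 // w_rec w0 w1; congr mk2; ring.
rewrite /mpow iterS -/(mpow _ m.+1) IH M3_mk2 // mk2_mul; congr mk2.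
- by rewrite (w_rec z m.+1); ring.
- by rewrite (w_rec z m); ring.
- by ring.
- by ring.
Qed.

Lemma only_if z (hz : z != 0) : PSLq_spec_finite z ->
  exists n : nat, (n \in [:: 2; 3; 4; 5]%N) /\ n.-primitive_root z.
Proof.
move=> [s Hs].
have [d [d0 [c Hc]]] := pow_scalar hz Hs (Gz_R z).
rewrite R_pow scalar_mk2 in Hc; case/mk2_eq: Hc => zd gd _ c1.
rewrite -c1 in zd.
have z1 : z != 1.
  apply/eqP => E; move: gd; rewrite E gR1 => /eqP; rewrite pnatr_eq0; lia.
have [n pn nd] := prim_order_exists d0 zd.
have n0 := prim_order_gt0 pn.
have n1 : n != 1%N.
  apply/eqP => E; move: (prim_expr_order pn); rewrite E expr1 => E1.
  by rewrite E1 eqxx in z1.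
case: (ltnP n 6) => [n6 | n6].
  exists n; split => //.
  by move: n0 n1 n6; case: (n) => [|[|[|[|[|[|]]]]]].
exfalso.
have HM3 : in_Gz z (M3 z) by apply: Gz_mul; [exact: Gz_R | apply: Gz_mul; [exact: Gz_R | apply: Gz_mul; [exact: Gz_R | exact: Gz_S]]].
have [e [e0 [c' Hc']]] := pow_scalar hz Hs HM3.
case: e e0 Hc' => [//|e] _ Hc'.
rewrite M3_pow // scalar_mk2 in Hc'; case/mk2_eq: Hc' => _ _ we _.
have r : root (map_poly (ratr : rat -> C) (Wp e.+1)) z by apply/rootP.
have := galois_C pn (om_prim n0) r => /rootP we'.
by have := w_om_neq0 n6 (ltn0Sn e); rewrite /w we' eqxx.
Qed.

Unset Implicit Arguments.
Theorem corollary4p3 (z : C) (hz : z != 0) :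
  PSLq_spec_finite z <->
  exists n : nat, (n \in [:: 2; 3; 4; 5]%N) /\ n.-primitive_root z.
Proof.
split; first exact: only_if.
by move=> [n [Hn Hp]]; exact: if_dir Hp Hn.
Qed.
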